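(* Let $G$ be a graph of order $n\ge 3$ with no isolated vertices and $b_{tR}(G)<\infty$, and suppose $\gamma_{tR}(G)=4$ (equivalently, $\Delta(G)\le n-2$ and there exist adjacent $u,v$ with $N[u]\cup N[v]=V(G)$). Then $b_{tR}(G)=b_t(G)$.
   Context: A TRDF on $G=(V,E)$ is a function $f:V\to\{0,1,2\}$ such that every $v$ with $f(v)=0$ has a neighbor $u$ with $f(u)=2$ and the subgraph induced by $\{v:f(v)>0\}$ has no isolated vertices; $\gamma_{tR}(G)$ is its minimum weight. $b_{tR}(G)$ is the minimum $|E'|$ such that $G-E'$ has no isolated vertices and $\gamma_{tR}(G-E')>\gamma_{tR}(G)$ ($\infty$ if none). $\gamma_t$ is the total domination number, and the total bondage number $b_t(G)$ is the minimum $|E'|$ such that $G-E'$ has no isolated vertices and $\gamma_t(G-E')>\gamma_t(G)$. *)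

(* Defs.v *)
From mathcomp Require Import all_boot.
Set Implicit Arguments. Unset Strict Implicit. Unset Printing Implicit Defensive.

Section Graphs.
Variable T : finType.
Implicit Types (E : {set {set T}}).

Definition simple_graph E : Prop := forall e, e \in E -> #|e| = 2.

Definition adj E (u v : T) : bool := (u != v) && ([set u; v] \in E).

Definition no_isolated E : bool := [forall v, [exists u, adj E v u]].

Definition is_TRDF E (f : {ffun T -> 'I_3}) : bool :=
  [forall v, ((f v : nat) == 0) ==> [exists u, adj E v u && ((f u : nat) == 2)]] &&
  [forall v, (0 < f v) ==> [exists u, adj E v u && (0 < f u)]].

Definition weight (f : {ffun T -> 'I_3}) : nat := \sum_(v : T) (f v : nat).

(* minimum weight of a TRDF; the default 2|V| is attained (by f = 2) whenever
   E has no isolated vertices, which is the only case where it is used. *)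
Definition gamma_tR E : nat :=
  \big[minn/(2 * #|T|)]_(f : {ffun T -> 'I_3} | is_TRDF E f) weight f.

Definition is_TDS E (S : {set T}) : bool := [forall v, [exists u, adj E v u && (u \in S)]].

(* total domination number; default |V| is attained (S = V) when no isolated vertices *)
Definition gamma_t E : nat := \big[minn/#|T|]_(S : {set T} | is_TDS E S) #|S|.

Definition feas_tR E (E' : {set {set T}}) : bool :=
  [&& E' \subset E, no_isolated (E :\: E') & gamma_tR E < gamma_tR (E :\: E')].
Definition feas_t E (E' : {set {set T}}) : bool :=
  [&& E' \subset E, no_isolated (E :\: E') & gamma_t E < gamma_t (E :\: E')].

(* bondage number: None encodes infinity (no feasible E') *)
Definition bondage E (feas : pred {set {set T}}) : option nat :=
  if [exists E', feas E'] then Some (\big[minn/#|E|]_(E' | feas E') #|E'|) else None.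

Definition b_tR E : option nat := bondage E (feas_tR E).
Definition b_t E : option nat := bondage E (feas_t E).
End Graphs.

(* Main.v *)
Require Import Defs.
From mathcomp Require Import all_boot.
From mathcomp Require Import zify.
From Stdlib Require Import Lia.
Set Implicit Arguments. Unset Strict Implicit. Unset Printing Implicit Defensive.

Section Aux.
Variable T : finType.
Implicit Types (E : {set {set T}}).

Lemma bigmin_le (I : finType) (P : pred I) (F : I -> nat) d i :
  P i -> \big[minn/d]_(j | P j) F j <= F i.
Proof.
move=> Pi; have: i \in index_enum I by rewrite mem_index_enum.
elim: (index_enum I) => // x s IH; rewrite inE big_cons => /orP[/eqP<-|/IH].
  by rewrite Pi geq_minl.
by case: (P x) => // h; apply: leq_trans (geq_minr _ _) h.
Qed.

Lemma bigmin_gt (I : finType) (P : pred I) (F : I -> nat) d k :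
  k < d -> (forall i, P i -> k < F i) -> k < \big[minn/d]_(j | P j) F j.
Proof.
move=> kd HF; apply: (big_ind (fun m => k < m)) => //.
by move=> x y hx hy; rewrite leq_min hx hy.
Qed.

Lemma bigmin_leE (I : finType) (P : pred I) (F : I -> nat) d k :
  k < d -> \big[minn/d]_(j | P j) F j <= k -> exists i, P i && (F i <= k).
Proof.
move=> kd H; apply/existsP; apply: contraLR H => /existsPn H.
rewrite -ltnNge; apply: bigmin_gt => // i Pi.
by move: (H i); rewrite Pi /= ltnNge.
Qed.

Lemma adj_sym E u v : adj E u v = adj E v u.
Proof. by rewrite /adj eq_sym setUC. Qed.

Lemma adj_neq E u v : adj E u v -> u != v.
Proof. by case/andP. Qed.

Lemma sum_ge3 (F : T -> nat) x y z : x != y -> x != z -> y != z ->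
  F x + F y + F z <= \sum_v F v.
Proof.
move=> xy xz yz.
rewrite (bigD1 x) // (bigD1 y) /=; last by rewrite eq_sym.
rewrite (bigD1 z) /=; last by rewrite eq_sym xz eq_sym yz.
by rewrite !addnA leq_addr.
Qed.

Lemma sum_ge4 (F : T -> nat) x y z t : x != y -> x != z -> x != t ->
  y != z -> y != t -> z != t ->
  F x + F y + F z + F t <= \sum_v F v.
Proof.
move=> xy xz xt yz yt zt.
rewrite (bigD1 x) // (bigD1 y) /=; last by rewrite eq_sym.
rewrite (bigD1 z) /=; last by rewrite eq_sym xz eq_sym yz.
rewrite (bigD1 t) /=; last by rewrite eq_sym xt eq_sym yt eq_sym zt.
by rewrite !addnA leq_addr.
Qed.

Definition o0 : 'I_3 := Ordinal (isT : 0 < 3).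
Definition o1 : 'I_3 := Ordinal (isT : 1 < 3).
Definition o2 : 'I_3 := Ordinal (isT : 2 < 3).

Lemma gamma_tR_le_n E : no_isolated E -> gamma_tR E <= #|T|.
Proof.
move=> /forallP ni.
have tr : is_TRDF E [ffun _ => o1].
  apply/andP; split; apply/forallP => v; rewrite ffunE //=.
  case/existsP: (ni v) => u au.
  by apply/existsP; exists u; rewrite au ffunE.
apply: leq_trans (bigmin_le _ _ tr) _.
rewrite /weight; under eq_bigr do rewrite ffunE /=.
by rewrite sum_nat_const muln1.
Qed.

Lemma tds_trdf E S : is_TDS E S -> is_TRDF E [ffun v => if v \in S then o2 else o0]
  /\ weight [ffun v => if v \in S then o2 else o0] = 2 * #|S|.
Proof.
move=> /forallP tds; split.
  have key v : [exists u, adj E v u && ((([ffun v => if v \in S then o2 else o0] u) : nat) == 2)].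
    case/existsP: (tds v) => u /andP[au uS].
    by apply/existsP; exists u; rewrite au ffunE uS.
  apply/andP; split; apply/forallP => v; apply/implyP => _.
    exact: key.
  case/existsP: (key v) => u /andP[au /eqP fu].
  by apply/existsP; exists u; rewrite au fu.
rewrite /weight.
under eq_bigr do rewrite ffunE (fun_if (@nat_of_ord 3)) /=.
by rewrite -big_mkcond /= sum_nat_const mulnC.
Qed.

Lemma trdf_tds E f : 4 < #|T| -> is_TRDF E f -> weight f <= 4 ->
  exists S, is_TDS E S && (#|S| <= 2).
Proof.
move=> n5 /andP[/forallP H0 /forallP Hp] wf.
have [v0 fv0] : exists v, (f v : nat) == 0.
  apply/existsP; apply: contraLR wf => /existsPn Hall.
  rewrite -ltnNge; apply: leq_trans n5 _.
  rewrite /weight -sum1_card; apply: leq_sum => v _.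
  by rewrite lt0n; apply: Hall.
move: (H0 v0); rewrite fv0 /= => /existsP[w /andP[_ /eqP fw]].
move: (Hp w); rewrite fw /= => /existsP[a /andP[awa fa]].
have wa := adj_neq awa.
have wt : forall x y z, x != y -> x != z -> y != z ->
   (f x : nat) + f y + f z <= 4.
  by move=> x y z xy xz yz; apply: leq_trans wf; apply: sum_ge3.
exists [set w; a]; apply/andP; split; last by rewrite cards2; case: (w != a).
apply/forallP => v.
case: (eqVneq (f v : nat) 0) => [fv|fv].
  move: (H0 v); rewrite fv /= => /existsP[u /andP[avu /eqP fu]].
  apply/existsP; exists u; rewrite avu /= !inE.
  apply/negPn/negP; rewrite negb_or => /andP[uw ua].
  have wu : w != u by rewrite eq_sym.
  have au' : a != u by rewrite eq_sym.
  have := wt w a u wa wu au'.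
  rewrite fw fu; move: fa; clear; lia.
case: (eqVneq v w) => [->|vw].
  by apply/existsP; exists a; rewrite awa !inE eqxx orbT.
case: (eqVneq v a) => [->|va].
  by apply/existsP; exists w; rewrite adj_sym awa !inE eqxx.
move: (Hp v); rewrite lt0n fv /= => /existsP[u /andP[avu fu]].
apply/existsP; exists u; rewrite avu /= !inE.
apply/negPn/negP; rewrite negb_or => /andP[uw ua].
have uv : v != u := adj_neq avu.
have wv : w != v by rewrite eq_sym.
have wu : w != u by rewrite eq_sym.
have av : a != v by rewrite eq_sym.
have au' : a != u by rewrite eq_sym.
have := sum_ge4 (fun x => (f x : nat)) wa wv wu av au' uv.
move=> /(leq_trans)/(_ wf); rewrite fw.
move: fa fv fu; rewrite -lt0n; clear; lia.
Qed.

Lemma tds_card E S : 0 < #|T| -> is_TDS E S -> 2 <= #|S|.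
Proof.
case/card_gt0P => v0 _ /forallP tds.
case/existsP: (tds v0) => u /andP[_ uS].
case/existsP: (tds u) => w /andP[auw wS].
apply: leq_trans (subset_leq_card (_ : [set u; w] \subset S)).
  by rewrite cards2 (adj_neq auw).
by apply/subsetP => x; rewrite !inE => /orP[] /eqP ->.
Qed.

Lemma gamma_t_ge2 E : 1 < #|T| -> 2 <= gamma_t E.
Proof.
move=> n2; apply: bigmin_gt => // S tds; apply: tds_card tds.
exact: ltnW.
Qed.

Lemma equiv_le E : 4 < #|T| -> (gamma_tR E <= 4) = (gamma_t E <= 2).
Proof.
move=> n5; apply/idP/idP.
  move/bigmin_leE => [|f /andP[tr wf]].
    by rewrite (leq_trans _ (leq_pmull _ _)) // ltnW.
  have [S /andP[tds cS]] := trdf_tds n5 tr wf.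
  exact: leq_trans (bigmin_le _ _ tds) cS.
move/bigmin_leE => [|S /andP[tds cS]].
  exact: leq_trans n5.
have [tr w] := tds_trdf tds.
apply: leq_trans (bigmin_le _ _ tr) _.
by rewrite w (leq_mul2l 2 _ 2).
Qed.

End Aux.

Theorem mainTheorem6 (T : finType) (E : {set {set T}}) :
  simple_graph E ->
  3 <= #|T| ->
  no_isolated E ->
  b_tR E <> None ->
  gamma_tR E = 4 ->
  b_tR E = b_t E.
Proof.
move=> _ n3 niE bfin g4.
have n5 : 4 < #|T|.
  move: bfin; rewrite /b_tR /bondage; case: existsP => // -[E' /and3P[_ ni lt]] _.
  by apply: leq_trans (gamma_tR_le_n ni); rewrite -g4.
have gt2 : gamma_t E = 2.
  apply/eqP; rewrite eqn_leq gamma_t_ge2 ?andbT; last exact: leq_trans n5.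
  by rewrite -equiv_le // g4.
have feq : feas_tR E =1 feas_t E.
  move=> E'; rewrite /feas_tR /feas_t; case: (E' \subset E) => //=.
  case: (no_isolated (E :\: E')) => //=.
  by rewrite g4 gt2 !ltnNge equiv_le.
by rewrite /b_tR /b_t /bondage (eq_existsb feq) (eq_bigl _ _ feq).
Qed.
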